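(* Let $A \in\mathcal{L}_d(\mathcal{Q})$, $A \neq 0$, admit a decomposition \[ A=\sum_{i=1}^t u^{(i)}u^{(i)\top} \] with $u^{(i)}\in\mathbb{F}_2^N$, such that its aggregate assignment is zero: \[ \sum_{i=1}^t u^{(i)}_U=0 \qquad\text{for every }U\in\mathcal{U}_{n,d}. \] Then \[ \operatorname{rank}(A) \ge \binom{d+1}{\lfloor (d+1)/2\rfloor} . \]
   Context: All objects are over $\mathbb{F}_2$. Fix integers $n\ge1$ and $d\ge1$, let $\mathcal{U}_{n,d}:=\{S\subseteq\{0,1,\dots,n\}:1\le|S|\le d\}$ and $N:=|\mathcal{U}_{n,d}|$. Let $\mathcal{Q}$ be a system of quadratic equations over $\mathbb{F}_2$ with zero constant term in the variables $\{y_S:S\in\mathcal{U}_{n,d}\}$, each of the form $\sum_{S,T\in\mathcal{U}_{n,d}} c_{S,T}y_Sy_T+\sum_{R\in\mathcal{U}_{n,d}} b_Ry_R=0$. Define $\mathcal{L}_d(\mathcal{Q})\subseteq\mathbb{F}_2^{N\times N}$ as the set of matrices $A$ with rows and columns indexed by $\mathcal{U}_{n,d}$ satisfying (1) the equal-union constraints $A_{S,T}=A_{S',T'}$ whenever $S\cup T=S'\cup T'$, and (2) for every equation of $\mathcal{Q}$, the linear constraint $\sum_{S,T} c_{S,T}A_{S,T}+\sum_R b_RA_{R,R}=0$. The vectors $u^{(i)}$ are viewed as assignments $y_U\mapsto u^{(i)}_U$; their aggregate assignment is the coordinate-wise sum $\sum_i u^{(i)}$. *)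

(* Defs.v *)
From HB Require Import structures.
From mathcomp Require Import all_boot all_order all_algebra.
Set Implicit Arguments. Unset Strict Implicit. Unset Printing Implicit Defensive.
Import GRing.Theory.
Local Open Scope ring_scope.

Definition Uidx (n d : nat) : finType :=
  {S : {set 'I_n.+1} | (0 < #|S| <= d)%N}.

(* N = |U_{n,d}| ; matrices/vectors are indexed by 'I_N through enum_rank. *)
Notation Nsz n d := #|Uidx n d|.

Definition ent (n d : nat) (A : 'M['F_2]_(Nsz n d)) (S T : Uidx n d) : 'F_2 :=
  A (enum_rank S) (enum_rank T).

(* A system Q of m quadratic equations with zero constant term:
   equation k is  sum_{S,T} c k S T y_S y_T + sum_R b k R y_R = 0.
   L_d(Q): matrices satisfying the equal-union constraints and the
   linearized equations. *)
Definition in_Ld (n d m : nat) (c : 'I_m -> Uidx n d -> Uidx n d -> 'F_2)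
    (b : 'I_m -> Uidx n d -> 'F_2) (A : 'M['F_2]_(Nsz n d)) : Prop :=
  (forall S T S' T' : Uidx n d, val S :|: val T = val S' :|: val T' ->
      ent A S T = ent A S' T') /\
  (forall k : 'I_m,
      \sum_(S : Uidx n d) \sum_(T : Uidx n d) c k S T * ent A S T
      + \sum_(R : Uidx n d) b k R * ent A R R = 0).

(* Main.v *)
Require Import Defs.
From mathcomp Require Import all_boot all_order all_algebra.
From mathcomp Require Import zify.
Import GRing.Theory.
Local Open Scope ring_scope.

Lemma F2cases (x : 'F_2) : x = 0 \/ x = 1.
Proof. case: x => [[|[|k]] Hk]; [left|right|]; try exact/val_inj. by []. Qed.

Lemma F2sq (x : 'F_2) : x * x = x.
Proof. by case: (F2cases x) => ->; rewrite ?mul0r ?mul1r. Qed.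

Lemma bin_mono_aux k : ('C(k, k./2) <= 'C(k.+1, k.+1./2))%N.
Proof.
rewrite -uphalfE uphalf_half; case: (odd k) => /=.
  by rewrite add1n binS leq_addl.
by rewrite add0n leq_bin2l.
Qed.

Lemma bin_mono d k : (d <= k)%N -> ('C(d, d./2) <= 'C(k, k./2))%N.
Proof.
elim: k => [|k IH]; first by rewrite leqn0 => /eqP ->.
rewrite leq_eqVlt => /orP[/eqP -> //|]; rewrite ltnS => /IH H.
exact: leq_trans H (bin_mono_aux k).
Qed.

Lemma rank_mxsub (F : fieldType) m n m' n' (f : 'I_m' -> 'I_m) (g : 'I_n' -> 'I_n)
  (A : 'M[F]_(m, n)) : (\rank (mxsub f g A) <= \rank A)%N.
Proof.
rewrite mxsubrc.
apply: leq_trans (mxrankS (rowsub_sub f _)) _.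
have -> : mxsub id g A = (rowsub g A^T)^T by apply/matrixP => i j; rewrite !mxE.
by rewrite mxrank_tr (leq_trans (mxrankS (rowsub_sub g _))) // mxrank_tr.
Qed.

Theorem lemma3p10 (n d m : nat) (hn : (1 <= n)%N) (hd : (1 <= d)%N)
    (c : 'I_m -> Uidx n d -> Uidx n d -> 'F_2) (b : 'I_m -> Uidx n d -> 'F_2)
    (A : 'M['F_2]_(Nsz n d)) (t : nat) (u : 'I_t -> 'cV['F_2]_(Nsz n d)) :
  in_Ld c b A -> A != 0 ->
  A = \sum_(i < t) (u i *m (u i)^T) ->
  (forall U : Uidx n d, \sum_(i < t) u i (enum_rank U) 0 = 0) ->
  ('C(d.+1, (d.+1)./2) <= \rank A)%N.
Proof.
move=> [Heq _] Anz Adec Hagg.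
have diag0 U : ent A U U = 0.
  rewrite /ent Adec summxE; rewrite -[RHS](Hagg U); apply: eq_bigr => i _.
  by rewrite mxE big_ord1 mxE F2sq.
have /existsP [S0 /existsP [T0 HST0]] : [exists S, exists T, ent A S T != 0].
  apply: contraT => H; rewrite -(negbTE Anz); apply/eqP/matrixP => i j.
  rewrite mxE; apply/eqP/negPn/negP => Hij; move/negP: H; apply.
  apply/existsP; exists (enum_val i); apply/existsP; exists (enum_val j).
  by rewrite /ent !enum_valK.
pose Pw (W : {set 'I_n.+1}) :=
  [exists S, exists T, (val S :|: val T == W) && (ent A S T != 0)].
have PW0 : Pw (val S0 :|: val T0).
  by apply/existsP; exists S0; apply/existsP; exists T0; rewrite eqxx.
case: (arg_minnP (fun W : {set 'I_n.+1} => #|W|) PW0) => W PW Wmin.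
case/existsP: PW => S1 /existsP [T1 /andP [/eqP HW HS1T1]].
have entW (S T : Uidx n d) : val S :|: val T \subset W ->
    ent A S T = (val S :|: val T == W)%:R.
  move=> sub; case: eqP => [E|NE].
    rewrite (Heq S T S1 T1); last by rewrite E HW.
    by case: (F2cases (ent A S1 T1)) HS1T1 => ->; rewrite ?eqxx.
  case: (F2cases (ent A S T)) => // E1; exfalso.
  have : Pw (val S :|: val T).
    by apply/existsP; exists S; apply/existsP; exists T; rewrite eqxx E1 oner_neq0.
  move/Wmin; rewrite leqNgt => /negP; apply.
  by rewrite proper_card // properEneq sub andbT; apply/eqP.
have /andP [S1p S1d] : (0 < #|val S1| <= d)%N := valP S1.
have /andP [T1p T1d] : (0 < #|val T1| <= d)%N := valP T1.
set k := #|W|.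
have kle : (k <= d + d)%N.
  rewrite /k -HW cardsU; lia.
have kgt : (d < k)%N.
  rewrite ltnNge; apply/negP => kd.
  have Wp : (0 < #|W|)%N.
    apply: leq_trans S1p _; apply: subset_leq_card; rewrite -HW; exact: subsetUl.
  have PU : (0 < #|W| <= d)%N by rewrite Wp kd.
  pose UW : Uidx n d := Sub W PU.
  have := diag0 UW; rewrite (Heq UW UW S1 T1) /= ?setUid //.
  by move/eqP; rewrite (negbTE HS1T1).
pose s := k./2.
have hk := odd_double_half k.
have s_pos : (0 < s)%N by rewrite half_gt0; lia.
have s_le : (s <= d)%N by rewrite /s; case: (odd k) hk => /=; lia.
have ks_pos : (0 < k - s)%N by rewrite /s; case: (odd k) hk => /=; lia.
have ks_le : (k - s <= d)%N by rewrite /s; case: (odd k) hk => /=; lia.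
pose P := [set X : {set 'I_n.+1} | X \subset W & #|X| == s].
have cardP : #|P| = 'C(k, s) by rewrite cards_draws.
pose toU (X : {set 'I_n.+1}) : Uidx n d := insubd S1 X.
pose X (i : 'I_#|P|) : {set 'I_n.+1} := enum_val i.
have XP i : X i \subset W /\ #|X i| = s.
  by have := enum_valP i; rewrite inE => /andP [? /eqP].
have valX i : val (toU (X i)) = X i.
  apply: insubdK; case: (XP i) => _ cX. by rewrite unfold_in /= cX s_pos s_le.
have valY i : val (toU (W :\: X i)) = W :\: X i.
  apply: insubdK; case: (XP i) => sub cX.
  by rewrite unfold_in /= cardsD (setIidPr sub) cX ks_pos ks_le.
pose f i := enum_rank (toU (X i)).
pose g i := enum_rank (toU (W :\: X i)).
have keyU (Y Z : {set 'I_n.+1}) : Y \subset W -> Z \subset W ->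
    (Y :|: (W :\: Z) == W) = (Z \subset Y).
  move=> hY hZ; apply/eqP/subsetP => [E y yZ | sb].
    have := subsetP hZ y yZ; rewrite -{1}E in_setU in_setD yZ /=.
    by rewrite orbF.
  apply/setP => y; rewrite in_setU in_setD.
  move: (subsetP hY y) (sb y); case: (y \in Y); case: (y \in Z);
    case: (y \in W) => //= h1 h2; first [by have := h1 isT | by have := h2 isT].
have Hid : mxsub f g A = 1%:M.
  apply/matrixP => i j; rewrite !mxE.
  have -> : A (f i) (g j) = ent A (toU (X i)) (toU (W :\: X j)) by [].
  case: (XP i) (XP j) => si ci [sj cj].
  rewrite entW; last by rewrite valX valY subUset si subsetDl.
  rewrite valX valY keyU //.
  case: (eqVneq i j) => [-> | nij]; first by rewrite subxx.
  suff -> : (X j \subset X i) = false by [].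
  apply/negP => sub; move/eqP: nij; apply; apply: enum_val_inj.
  apply/eqP; rewrite eq_sym eqEcard sub /=.
  by rewrite -/(X i) -/(X j) ci cj.
have := @rank_mxsub _ _ _ _ _ f g A; rewrite Hid mxrank1 cardP => H.
apply: leq_trans H; exact: bin_mono.
Qed.
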